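(* Let $(U_0,\dots,U_n)$ be the urn process. For $0\le k\le l\le n$, \[ \mathbf E(U_k)=\frac{k(n-k)}{n-1},\qquad \mathbf{Cov}(U_k,U_l)=\frac{k(k-1)(n-l)(n-l-1)}{(n-1)^2(n-2)}. \]
   Context: Urn process: let $n\ge3$. An urn initially contains $n$ black balls. It is emptied in $n$ steps: in each of the first $n-1$ steps a uniformly random pair of balls is removed from the urn and replaced by one red ball; in step $n$ the last remaining ball is removed. $U_k$ is the number of red balls in the urn after $k$ steps, $0\le k\le n$. Equivalently, $(U_k)$ is the Markov chain with $U_0=0$ and $\mathbf P(U_{k+1}=u-1\mid U_k=u)=\binom u2/\binom{n-k}2$, $\mathbf P(U_{k+1}=u\mid U_k=u)=u(n-k-u)/\binom{n-k}2$, $\mathbf P(U_{k+1}=u+1\mid U_k=u)=\binom{n-k-u}2/\binom{n-k}2$ (for $k\le n-2$), and $U_n=0$. *)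

(* Defs.v *)
From HB Require Import structures.
From mathcomp Require Import all_boot all_order all_algebra.
Set Implicit Arguments. Unset Strict Implicit. Unset Printing Implicit Defensive.
Import Order.TTheory GRing.Theory Num.Theory.
Local Open Scope ring_scope.

Definition urn_trans (n k u v : nat) : rat :=
  if (k <= n - 2)%N then
    let N := (n - k)%N in
    (((v.+1 == u)%:R * 'C(u, 2)%:R
      + (v == u)%:R * (u * (N - u))%:R
      + (v == u.+1)%:R * 'C(N - u, 2)%:R) / 'C(N, 2)%:R)
  else (v == 0%N)%:R.

Fixpoint urn_kern (n k m u v : nat) : rat :=
  match m with
  | 0 => (u == v)%:R
  | m'.+1 => \sum_(w < n.+1) urn_kern n k m' u w * urn_trans n (k + m') w v
  end.

Definition urn_dist (n k u : nat) : rat := urn_kern n 0 k 0 u.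

(* Joint law: P(U_k = a, U_l = b) for k <= l (Markov property). *)
Definition urn_joint (n k l a b : nat) : rat :=
  urn_dist n k a * urn_kern n k (l - k) a b.

Definition urn_mean (n k : nat) : rat :=
  \sum_(u < n.+1) (u : nat)%:R * urn_dist n k u.

Definition urn_cov (n k l : nat) : rat :=
  \sum_(a < n.+1) \sum_(b < n.+1) ((a : nat) * (b : nat))%:R * urn_joint n k l a b
  - urn_mean n k * urn_mean n l.

(* Main.v *)
Require Import Defs.
From HB Require Import structures.
From mathcomp Require Import all_boot all_order all_algebra.
From Stdlib Require Import Ring Field.
Import Order.TTheory GRing.Theory Num.Theory.
Local Open Scope ring_scope.
Definition radd (x y : rat) : rat := x + y.
Definition rmul (x y : rat) : rat := x * y.
Definition ropp (x : rat) : rat := - x.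
Definition rinv (x : rat) : rat := x^-1.
Definition rsub (x y : rat) : rat := radd x (ropp y).
Definition rdiv (x y : rat) : rat := rmul x (rinv y).
Definition rzero : rat := 0.
Definition rone : rat := 1.
Lemma rat_rt : @ring_theory rat rzero rone radd rmul rsub ropp eq.
Proof. rewrite /rzero/rone/radd/rmul/rsub/ropp/radd. split=> *. exact: add0r. exact: addrC. exact: addrA. exact: mul1r. exact: mulrC. exact: mulrA. exact: mulrDl. done. exact: subrr. Qed.
Lemma rat_ft : @field_theory rat rzero rone radd rmul rsub ropp rdiv rinv eq.
Proof. split=> //; first exact: rat_rt. by move=> p; rewrite /rzero/rmul/rinv => /eqP hp; rewrite mulVf. Qed.
Add Field ratF : rat_ft.
Lemma raddE (x y : rat) : x + y = radd x y. Proof. by []. Qed.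
Lemma rmulE (x y : rat) : x * y = rmul x y. Proof. by []. Qed.
Lemma roppE (x : rat) : - x = ropp x. Proof. by []. Qed.
Lemma rinvE (x : rat) : x^-1 = rinv x. Proof. by []. Qed.
Definition rnat (n : nat) : rat := n%:R.
Lemma rnatE n : n%:R = rnat n. Proof. by []. Qed.
Lemma r0E : 0 = rzero. Proof. by []. Qed.
Lemma r1E : 1 = rone. Proof. by []. Qed.
Ltac rnorm := rewrite ?mul0n ?muln0 ?mulr0n ?mulr1n ?rnatE ?raddE ?rmulE ?roppE ?rinvE ?r0E ?r1E;
  match goal with |- @eq _ ?a ?b => change (@eq rat a b) end.
Ltac rnormf := rewrite ?mul0n ?muln0 ?mulr0n ?mulr1n ?rnatE ?raddE ?rmulE ?roppE ?rinvE ?r0E ?r1E;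
  match goal with |- @eq _ ?a ?b => change (@eq rat a b) end.
From Stdlib Require Import Lia.

Ltac nlia := repeat match goal with H : is_true (_ <= _)%N |- _ => move/ssrnat.leP: H => H end;
  try apply/ssrnat.leP; repeat (rewrite <- plusE in * || rewrite <- minusE in * || rewrite <- multE in * ); lia.

Definition E n k m u (f : nat -> rat) := \sum_(v < n.+1) f v * urn_kern n k m u v.
Definition T n t (f : nat -> rat) w := \sum_(v < n.+1) urn_trans n t w v * f v.

Lemma E_S n k m u f : E n k m.+1 u f = E n k m u (T n (k+m) f).
Proof.
rewrite /E /=.
under eq_bigr => v _ do rewrite mulr_sumr.
rewrite exchange_big; apply: eq_bigr => w _.
rewrite /T mulr_suml; apply: eq_bigr => v _.
by rnorm; ring.
Qed.

Lemma support n k m u v : (u <= n - k)%N -> (k + m <= n)%N -> (n - (k + m) < v)%N ->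
  urn_kern n k m u v = 0.
Proof.
move=> hu; elim: m v => [|m IH] v hkm hv /=.
  rewrite addn0 in hv; case: eqP => // e; subst; nlia.
rewrite big1 // => w _.
case: (leqP w (n - (k + m))) => hw; last by rewrite IH ?mul0r //; nlia.
apply/eqP; rewrite mulf_eq0; apply/orP; right; apply/eqP.
rewrite /urn_trans; case: ifP => ht.
  apply/eqP; rewrite mulf_eq0; apply/orP; left; apply/eqP.
  case: eqP => e1.
    exfalso; nlia.
  case: eqP => e2.
    have -> : (n - (k + m) - w)%N = 0%N by nlia.
    by rewrite muln0 bin0n !mulr0 mul0r !addr0.
  case: eqP => e3; last by rewrite !mul0r !addr0.
  rewrite (@bin_small (n - (k + m) - w)); first by rewrite !mul0r !mulr0 !addr0.
  nlia.
move/negbT: ht; rewrite -ltnNge => ht.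
suff -> : (v == 0%N) = false by [].
apply/eqP; nlia.
Qed.

Lemma E_ext n k m u f g : (u <= n - k)%N -> (k + m <= n)%N ->
  (forall w, (w <= n - (k + m))%N -> f w = g w) -> E n k m u f = E n k m u g.
Proof.
move=> hu hkm h; apply: eq_bigr => v _.
case: (leqP v (n - (k + m))) => hv; first by rewrite h.
by rewrite support // !mulr0.
Qed.

Lemma sum_delta n (j : nat) (F : nat -> rat) :
  \sum_(v < n.+1) ((v : nat) == j)%:R * F v = (j <= n)%:R * F j.
Proof.
case: (leqP j n) => hj.
  rewrite (bigD1 (Ordinal (hj : (j < n.+1)%N))) //= eqxx mul1r big1 ?addr0 // => v hv.
  suff -> : ((v : nat) == j) = false by rewrite mul0r.
  apply/negbTE; apply: contra hv => /eqP e; apply/eqP; exact: val_inj.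
rewrite big1 ?mul0r // => v _.
suff -> : ((v : nat) == j) = false by rewrite mul0r.
apply/negbTE; apply/eqP => e; move: (ltn_ord v); rewrite e => h; nlia.
Qed.

Lemma E0 n k a f : (a <= n)%N -> E n k 0 a f = f a.
Proof.
move=> ha; rewrite /E /=.
under eq_bigr => v _ do rewrite eq_sym mulrC.
by rewrite sum_delta ha mul1r.
Qed.

Lemma E_lin3 n k m u a b c f g h :
  E n k m u (fun w => a * f w + b * g w + c * h w) =
  a * E n k m u f + b * E n k m u g + c * E n k m u h.
Proof.
rewrite /E !mulr_sumr -!big_split; apply: eq_bigr => v _ /=; rnorm; ring.
Qed.

Lemma E_zero n k m u : E n k m u (fun _ => 0) = 0.
Proof. by rewrite /E big1 // => v _; rewrite mul0r. Qed.

Lemma T_last n t f w : (n - 2 < t)%N -> T n t f w = f 0%N.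
Proof.
move=> ht; rewrite /T /urn_trans.
have -> : (t <= n - 2)%N = false by apply/negbTE; rewrite -ltnNge.
by rewrite sum_delta /= mul1r.
Qed.

Lemma T_gen n t f w : (t <= n - 2)%N -> (w <= n - t)%N ->
  T n t f w = ('C(w, 2)%:R * f w.-1 + (w * (n - t - w))%:R * f w
     + 'C(n - t - w, 2)%:R * f w.+1) / 'C(n - t, 2)%:R.
Proof.
move=> ht hw; rewrite /T /urn_trans ht.
set D := 'C(n - t, 2)%:R.
transitivity (\sum_(v < n.+1) (((v : nat) == w.-1)%:R * ('C(w, 2)%:R * f v / D))
   + \sum_(v < n.+1) (((v : nat) == w)%:R * ((w * (n - t - w))%:R * f v / D))
   + \sum_(v < n.+1) (((v : nat) == w.+1)%:R * ('C(n - t - w, 2)%:R * f v / D))).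
  rewrite -!big_split; apply: eq_bigr => v _ /=.
  case: (w =P 0%N) => [->|w0].
    rewrite bin0n /=; rewrite /D; rnorm. rnorm; ring.
  have -> : ((v : nat).+1 == w) = ((v : nat) == w.-1).
    by apply/eqP/eqP; nlia.
  rnorm; ring.
rewrite (sum_delta n w.-1 (fun v => 'C(w, 2)%:R * f v / D)).
rewrite (sum_delta n w (fun v => (w * (n - t - w))%:R * f v / D)).
rewrite (sum_delta n w.+1 (fun v => 'C(n - t - w, 2)%:R * f v / D)) /=.
have -> : (w.-1 <= n)%N by nlia.
have -> : (w <= n)%N by nlia.
case: (w =P 0%N) => [->|w0].
  rewrite bin0n /=; case: (leqP 1 n) => h1 /=; first by rnorm; ring.
  have -> : (n - t - 0 = 0)%N by nlia.
  rewrite bin0n /=; rnorm; ring.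
case: (leqP w.+1 n) => h1 /=; first by rnorm; ring.
have -> : (n - t - w = 0)%N by nlia.
rewrite bin0n /=; rnorm; ring.
Qed.

Ltac fside := repeat split; rewrite /rnat /radd /rmul /ropp /rzero /rone /rinv;
  first [ assumption | (apply/eqP; done) | idtac ].

Definition one : nat -> rat := fun _ => 1.
Definition idf : nat -> rat := fun w => w%:R.
Definition sqf : nat -> rat := fun w => w%:R * w%:R.

Lemma two_nz : (1 + 1 : rat) != 0.
Proof. by []. Qed.

Lemma solve_div (a b c : rat) : c != 0 -> a * c = b -> a = b / c.
Proof. by move=> hc <-; rewrite mulfK. Qed.

Lemma natS (x : nat) : x.+1%:R = x%:R + 1 :> rat.
Proof. by rewrite natr1. Qed.

Lemma binR x : 'C(x, 2)%:R = x%:R * (x%:R - 1) / (1 + 1) :> rat.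
Proof.
apply: solve_div; first exact: two_nz.
elim: x => [|x IH]; first by rewrite bin0n /= mul0r mul0r.
rewrite binS bin1 natrD natS mulrDl IH; rnorm; ring.
Qed.

Lemma predR (g : rat -> rat) w :
  'C(w, 2)%:R * g (w.-1)%:R = 'C(w, 2)%:R * g (w%:R - 1).
Proof. by case: w => [|j]; [rewrite bin0n /= !mul0r | rewrite /= natS addrK]. Qed.

Lemma nzN (a : nat) : (0 < a)%N -> a%:R != 0 :> rat.
Proof. by move=> h; rewrite pnatr_eq0 -lt0n. Qed.

Lemma nzN1 (a : nat) : (1 < a)%N -> a%:R - 1 != 0 :> rat.
Proof.
move=> h; have -> : a = a.-1.+1 by rewrite prednK //; nlia.
rewrite natS addrK; apply: nzN; nlia.
Qed.

Lemma T_poly n t f (g : rat -> rat) w : (t <= n - 2)%N -> (w <= n - t)%N ->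
  (forall j, f j = g j%:R) ->
  let x := w%:R in let y := (n - t)%:R in
  T n t f w = (x * (x - 1) / (1 + 1) * g (x - 1) + x * (y - x) * g x
      + (y - x) * (y - x - 1) / (1 + 1) * g (x + 1)) / (y * (y - 1) / (1 + 1)).
Proof.
move=> ht hw hf x y.
rewrite T_gen // !hf predR natS natrM (natrB _ hw) !binR -/x -/y.
by rewrite (natrB _ hw).
Qed.

Lemma T_one n t w : (2 <= n)%N -> (t <= n - 2)%N -> (w <= n - t)%N -> T n t one w = 1.
Proof.
move=> h2 ht hw.
have hy : (n - t)%:R != 0 :> rat by apply: nzN; nlia.
have hy1 : (n - t)%:R - 1 != 0 :> rat by apply: nzN1; nlia.
rewrite (@T_poly n t one (fun _ => 1)) //.
move: hy hy1 two_nz; rewrite /= => /eqP hy /eqP hy1 /eqP h2'.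
rnormf; field; fside.
Qed.

Definition alpha (y : rat) := 1 - (1+1+1+1)/y + (1+1)/(y*(y-1)).
Definition beta (y : rat) := (1+1) - (1+1)/(y-1).

Lemma T_id n t w : (2 <= n)%N -> (t <= n - 2)%N -> (w <= n - t)%N ->
  T n t idf w = ((n - t)%:R - (1+1)) / (n - t)%:R * w%:R + 1.
Proof.
move=> h2 ht hw.
have hy : (n - t)%:R != 0 :> rat by apply: nzN; nlia.
have hy1 : (n - t)%:R - 1 != 0 :> rat by apply: nzN1; nlia.
rewrite (@T_poly n t idf (fun x => x)) //.
move: hy hy1 two_nz; rewrite /= => /eqP hy /eqP hy1 /eqP h2'.
rnormf; field; fside.
Qed.

Lemma T_sq n t w : (2 <= n)%N -> (t <= n - 2)%N -> (w <= n - t)%N ->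
  T n t sqf w = alpha (n - t)%:R * sqf w + beta (n - t)%:R * idf w + 1 * one w.
Proof.
move=> h2 ht hw.
have hy : (n - t)%:R != 0 :> rat by apply: nzN; nlia.
have hy1 : (n - t)%:R - 1 != 0 :> rat by apply: nzN1; nlia.
rewrite (@T_poly n t sqf (fun x => x * x)) // /alpha /beta /sqf /idf /one.
move: hy hy1 two_nz; rewrite /= => /eqP hy /eqP hy1 /eqP h2'.
rnormf; field; fside.
Qed.

Lemma nzB (a b : nat) : (b < a)%N -> a%:R - b%:R != 0 :> rat.
Proof. by move=> h; rewrite -natrB ?nzN //; nlia. Qed.

Lemma G n k a m : (3 <= n)%N -> (a <= n - k)%N -> (k + m <= n - 1)%N ->
  E n k m a one = 1 /\
  (n%:R - k%:R) * (n%:R - k%:R - 1) * E n k m a idf =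
  (n%:R - k%:R - m%:R) * (n%:R - k%:R - m%:R - 1) * a%:R
    + (n%:R - k%:R - m%:R) * m%:R * (n%:R - k%:R).
Proof.
move=> h3 ha; have ha' : (a <= n)%N by nlia.
elim: m => [|m IH] hkm.
  rewrite !E0 // /one /idf.
  split => //; rnorm; ring.
have hkm' : (k + m <= n - 2)%N by nlia.
have [h1 h2] := IH ltac:(nlia).
rewrite !E_S.
have ->: E n k m a (T n (k + m) one) = E n k m a one.
  apply: E_ext; [done | nlia | move=> w hw; apply: T_one => //; nlia].
have ->: E n k m a (T n (k + m) idf) = E n k m a (fun w =>
     ((n - (k + m))%:R - (1 + 1)) / (n - (k + m))%:R * idf w + 1 * one w + 0 * one w).
  apply: E_ext; [done | nlia | move=> w hw; rewrite T_id //; try nlia].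
  by rewrite /one /idf mul0r addr0 mul1r.
rewrite E_lin3 h1.
have hk0 : n%:R - k%:R != 0 :> rat by apply: nzB; nlia.
have hk1 : n%:R - k%:R - 1 != 0 :> rat by rewrite -addrA -opprD natr1; apply: nzB; nlia.
have hP : (n%:R - k%:R) * (n%:R - k%:R - 1) != 0 :> rat by rewrite mulf_eq0 negb_or hk0 hk1.
rewrite mulrC in h2; have -> := @solve_div _ _ _ hP h2.
split => //.
have hy : (n%:R - (k%:R + m%:R)) != 0 :> rat by rewrite -natrD; apply: nzB; nlia.
move: hk0 hk1 hy => /eqP hk0 /eqP hk1 /eqP hy.
rewrite (natrB _ (_ : (k + m <= n)%N)) ?natrD ?natS; last by nlia.
rnormf; field; fside.
Qed.

Lemma E_congr n k m u f g : (forall w, f w = g w) -> E n k m u f = E n k m u g.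
Proof. by move=> h; apply: eq_bigr => v _; rewrite h. Qed.

Lemma E_last n k a f : (2 <= n)%N -> (k < n)%N -> f 0%N = 0 -> E n k (n - k) a f = 0.
Proof.
move=> h2 hk hf.
have -> : (n - k = (n - k - 1).+1)%N by nlia.
rewrite E_S (@E_congr _ _ _ _ _ (fun _ => 0)) ?E_zero // => w.
by rewrite T_last //; nlia.
Qed.

Lemma M n m : (3 <= n)%N -> (m <= n)%N ->
  E n 0 m 0 idf = m%:R * (n%:R - m%:R) / (n%:R - 1).
Proof.
move=> h3 hm.
have hn1 : n%:R - 1 != 0 :> rat by apply: nzN1; nlia.
case: (leqP m (n - 1)) => hm1.
  have [_ h] := @G n 0 0 m h3 ltac:(nlia) ltac:(nlia).
  have hP : (n%:R - 0%:R) * (n%:R - 0%:R - 1) != 0 :> rat.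
    by rewrite subr0 mulf_eq0 negb_or hn1 andbT; apply: nzN; nlia.
  rewrite mulrC in h; rewrite (@solve_div _ _ _ hP h).
  move: hn1 => /eqP hn1.
  have hn0 : n%:R <> 0 :> rat by apply/eqP; apply: nzN; nlia.
  rnormf; field; fside.
have -> : m = n by nlia.
have := @E_last n 0 0 idf ltac:(nlia) ltac:(nlia) (erefl _); rewrite subn0 => ->.
rnorm; ring.
Qed.

Definition Qf (n m : nat) : rat :=
  let nR := n%:R in let mR := m%:R in
  (mR * (mR - 1) * (nR - mR) * (nR - mR - 1) + mR * mR * (nR - mR) * (nR - mR) * (nR - (1 + 1)))
  / ((nR - 1) * (nR - 1) * (nR - (1 + 1))).

Lemma S n m : (3 <= n)%N -> (m <= n)%N -> E n 0 m 0 sqf = Qf n m.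
Proof.
move=> h3 hm.
have hn1 : n%:R - 1 != 0 :> rat by apply: nzN1; nlia.
have hn2 : n%:R - (1 + 1) != 0 :> rat by rewrite (_ : (1 + 1 : rat) = 2%:R) //; apply: nzB; nlia.
case: (leqP m (n - 1)) => hm1; last first.
  have -> : m = n by nlia.
  have := @E_last n 0 0 sqf ltac:(nlia) ltac:(nlia) (erefl _); rewrite subn0 => ->.
  rewrite /Qf; rnorm; ring.
elim: m hm hm1 => [|m IH] hm hm1.
  rewrite E0 // /sqf /Qf; rnorm; ring.
have hm' : (m <= n - 2)%N by nlia.
rewrite E_S add0n.
have ->: E n 0 m 0 (T n m sqf) = E n 0 m 0 (fun w =>
     alpha (n - m)%:R * sqf w + beta (n - m)%:R * idf w + 1 * one w).
  apply: E_ext; [nlia | nlia | move=> w hw; rewrite T_sq //; nlia].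
rewrite E_lin3 IH ?M; try nlia.
have [-> _] := @G n 0 0 m h3 ltac:(nlia) ltac:(nlia).
have hy : n%:R - m%:R != 0 :> rat by apply: nzB; nlia.
have hy1 : n%:R - m%:R - 1 != 0 :> rat by rewrite -addrA -opprD natr1; apply: nzB; nlia.
rewrite /alpha /beta /Qf (natrB _ (_ : (m <= n)%N)) ?natS; last by nlia.
move: hn1 hn2 hy hy1 => /eqP hn1 /eqP hn2 /eqP hy /eqP hy1.
rnormf; field; fside.
Qed.

Lemma natm1 (x : nat) : (x * (x - 1))%:R = x%:R * (x%:R - 1) :> rat.
Proof. case: x => [|x]; first by rewrite !mul0r mul0n. by rewrite natrM subn1 /= natS addrK. Qed.

Lemma rhs_conv n k l : (3 <= n)%N -> (l <= n)%N ->
  (k * (k - 1) * (n - l) * (n - l - 1))%:R / ((n - 1) ^ 2 * (n - 2))%:R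
  = k%:R * (k%:R - 1) * ((n%:R - l%:R) * (n%:R - l%:R - 1)) / ((n%:R - 1) * (n%:R - 1) * (n%:R - (1 + 1))) :> rat.
Proof.
move=> h3 hl.
rewrite -mulnA natrM natm1 (natm1 (n - l)) (natrB _ hl).
rewrite natrM natrX expr2 (natrB _ (_ : 1 <= n)%N); last by nlia.
rewrite (natrB _ (_ : 2 <= n)%N); last by nlia.
by rewrite (_ : (1 + 1 : rat) = 2%:R).
Qed.

Lemma cov_sum n k l :
  \sum_(a < n.+1) \sum_(b < n.+1) ((a : nat) * (b : nat))%:R * urn_joint n k l a b
  = E n 0 k 0 (fun a => a%:R * E n k (l - k) a idf).
Proof.
rewrite /E; apply: eq_bigr => a _.
rewrite /urn_joint /urn_dist mulr_sumr mulr_suml; apply: eq_bigr => b _.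
rewrite natrM /idf; rnorm; ring.
Qed.

Theorem proposition6 (n k l : nat) (hn : (3 <= n)%N) (hkl : (k <= l)%N) (hln : (l <= n)%N) :
  urn_mean n k = (k * (n - k))%:R / (n - 1)%:R /\
  urn_cov n k l =
    (k * (k - 1) * (n - l) * (n - l - 1))%:R / ((n - 1) ^ 2 * (n - 2))%:R.
Proof.
have hkn : (k <= n)%N by nlia.
have hn1 : n%:R - 1 != 0 :> rat by apply: nzN1; nlia.
have hn2 : n%:R - (1 + 1) != 0 :> rat by rewrite (_ : (1 + 1 : rat) = 2%:R) //; apply: nzB; nlia.
have hmean : forall j, (j <= n)%N -> urn_mean n j = E n 0 j 0 idf by [].
split.
  have h1n : (1 <= n)%N by nlia.
  by rewrite hmean // M // natrM (natrB _ hkn) (natrB _ h1n) mulr1n.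
rewrite /urn_cov cov_sum rhs_conv // !hmean //.
move: hn1 hn2 => /eqP hn1 /eqP hn2.
case: (ltngtP k l) => hkl'; last first.
-
  subst l; rewrite subnn.
  have -> : E n 0 k 0 (fun a => a%:R * E n k 0 a idf) = E n 0 k 0 sqf.
    apply: E_ext; [nlia | nlia | move=> w hw; rewrite E0 /sqf /idf //; nlia].
  rewrite S ?M // /Qf; rnormf; field; fside.
- by move: hkl'; rewrite ltnNge hkl.
case: (ltnP l n) => hl.
-
  set m := (l - k)%N.
  have hlm : l = (k + m)%N by rewrite /m; nlia.
  have hk0 : n%:R - k%:R != 0 :> rat by apply: nzB; nlia.
  have hk1 : n%:R - k%:R - 1 != 0 :> rat by rewrite -addrA -opprD natr1; apply: nzB; nlia.
  have hP : (n%:R - k%:R) * (n%:R - k%:R - 1) != 0 :> rat by rewrite mulf_eq0 negb_or hk0 hk1.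
  rewrite (@E_ext n 0 k 0 _ (fun a =>
     ((n%:R - k%:R - m%:R) * (n%:R - k%:R - m%:R - 1) / ((n%:R - k%:R) * (n%:R - k%:R - 1))) * sqf a
     + ((n%:R - k%:R - m%:R) * m%:R * (n%:R - k%:R) / ((n%:R - k%:R) * (n%:R - k%:R - 1))) * idf a
     + 0 * one a)); last 3 first.
  + nlia.
  + nlia.
  + move=> a ha.
    have [_ h] := @G n k a m hn ltac:(nlia) ltac:(nlia).
    rewrite mulrC in h; rewrite (@solve_div _ _ _ hP h) /sqf /idf.
    move: hk0 hk1 => /eqP hk0 /eqP hk1.
    rnormf; field; fside.
  rewrite E_lin3 S ?M //; try nlia.
  rewrite /Qf hlm natrD.
  move: hk0 hk1 => /eqP hk0 /eqP hk1.
  rnormf; field; fside.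
-
  have -> : l = n by nlia.
  rewrite (@E_congr n 0 k 0 _ (fun _ => 0)) ?E_zero; last first.
    by move=> a; rewrite E_last ?mulr0 //; nlia.
  rewrite (@M n k hn hkn) (@M n n hn (leqnn n)).
  rnormf; field; fside.
Qed.
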